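(* Let $K$ be a field, $\mathcal{H}$ a simple hypergraph on $\{x_1,\dots,x_n\}$ with edges $S_1,\dots,S_m$, $R=K[x_1,\dots,x_n]$, let $i,j$ be integers and let $\mathcal{B}_{i,j}$ be the set of basis elements $\overline{e_{\ell_1,\dots,\ell_i}}$ of $\overline{T}_i$ with $\overline{e_{\ell_1,\dots,\ell_i}}\in\mathrm{Ker}\,\overline{\partial}_i\setminus\mathrm{Im}\,\overline{\partial}_{i+1}$ and $|\bigcup_{k=1}^iS_{\ell_k}|=j$. (1) If for all pairwise distinct edges $E_1,\dots,E_i$ of $\mathcal{H}$ (in any order) with $|\bigcup_{\ell=1}^iE_\ell|=j$ we have $E_1\nsubseteq\bigcup_{\ell=2}^iE_\ell$, then $\{e+\mathrm{Im}\,\overline{\partial}_{i+1}: e\in\mathcal{B}_{i,j}\}$ generates $(\mathrm{Ker}\,\overline{\partial}_i/\mathrm{Im}\,\overline{\partial}_{i+1})_j$ over $K$, and hence $\beta_{i,j}(R/I(\mathcal{H}))\le|\mathcal{B}_{i,j}|$. (2) If for all pairwise distinct edges $E_1,\dots,E_{i+1}$ of $\mathcal{H}$ with $E_{i+1}\subseteq\bigcup_{\ell=1}^iE_\ell$ and $|\bigcup_{\ell=1}^iE_\ell|=j$ we have $E_k\nsubseteq\bigcup_{1\le\ell\le i+1,\ell\neq k}E_\ell$ for all $1\le k\le i$, then $\{e+\mathrm{Im}\,\overline{\partial}_{i+1}: e\in\mathcal{B}_{i,j}\}$ is linearly independent over $K$ in $(\mathrm{Ker}\,\overline{\partial}_i/\mathrm{Im}\,\overline{\partial}_{i+1})_j$,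 and hence $\beta_{i,j}(R/I(\mathcal{H}))\ge|\mathcal{B}_{i,j}|$. (3) If the hypotheses of both (1) and (2) hold, then $\beta_{i,j}(R/I(\mathcal{H}))=|\mathcal{B}_{i,j}|$. In particular this equality holds when $j=ti$, where $t=\max\{|S|:S\in\mathcal{E}(\mathcal{H})\}$.
   Context: A simple hypergraph $\mathcal{H}$ on $\{x_1,\dots,x_n\}$ is a set $\mathcal{E}(\mathcal{H})$ of subsets (edges) of cardinality at least $2$, none contained in another; $I(\mathcal{H})=\langle \prod_{x\in S}x : S\in\mathcal{E}(\mathcal{H})\rangle\subseteq R$, $R$ standard graded, $\beta_{i,j}(R/I)=\dim_K\mathrm{Tor}_i^R(R/I,K)_j$. With edges ordered $S_1,\dots,S_m$, let $\overline{T}_0=K$ and for $i\ge1$ let $\overline{T}_i$ be the $K$-vector space with basis $\overline{e_{\ell_1,\dots,\ell_i}}$, $1\le\ell_1<\dots<\ell_i\le m$, where $\overline{e_{\ell_1,\dots,\ell_i}}$ has degree $|\bigcup_{t=1}^iS_{\ell_t}|$, with differential $\overline{\partial}_i(\overline{e_{\ell_1,\dots,\ell_i}})=\sum_{k:\,S_{\ell_k}\subseteq\bigcup_{t\neq k}S_{\ell_t}}(-1)^k\,\overline{e_{\ell_1,\dots,\widehat{\ell_k},\dots,\ell_i}}$ (this is the Taylor resolution of $R/I(\mathcal{H})$ tensored with $K=R/\langle x_1,\dots,x_n\rangle$), so that $\beta_{i,j}(R/I(\mathcal{H}))=\dim_K(\mathrm{Ker}\,\overline{\partial}_i/\mathrm{Im}\,\overline{\partial}_{i+1})_j$.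 *)

(* Defs.v *)
From HB Require Import structures.
From mathcomp Require Import all_boot all_order all_algebra.
Set Implicit Arguments.
Unset Strict Implicit.
Unset Printing Implicit Defensive.
Import GRing.Theory.
Local Open Scope ring_scope.

(* A hypergraph on vertices 'I_n with edges S_1..S_m, given as S : 'I_m -> {set 'I_n}
   (the order of edges is the order of 'I_m). *)
Definition simple_hypergraph (n m : nat) (S : 'I_m -> {set 'I_n}) : Prop :=
  (forall a, 2 <= #|S a|)%N /\ (forall a b, a != b -> ~~ (S a \subset S b)).

Section Taylor.
Variables (K : fieldType) (n m : nat) (S : 'I_m -> {set 'I_n}).

(* The direct sum of all the T̄_i : coefficient functions on subsets
   L = {l_1 < ... < l_i} of the edge indices. *)
Definition Tbar := {ffun {set 'I_m} -> K^o}.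

Definition ebar (L : {set 'I_m}) : Tbar := [ffun X => (X == L)%:R].

Definition edeg (L : {set 'I_m}) : nat := #|\bigcup_(l in L) S l|.

(* position (1-indexed) of k in the increasing enumeration of L *)
Definition pos (L : {set 'I_m}) (k : 'I_m) : nat := #|[set l in L | (l <= k)%N]|.

Definition dbar_e (L : {set 'I_m}) : Tbar :=
  \sum_(k in L | S k \subset \bigcup_(l in L | l != k) S l)
     (-1) ^+ pos L k *: ebar (L :\ k).

Definition dbar_fun (f : Tbar) : Tbar := \sum_(L : {set 'I_m}) f L *: dbar_e L.

Definition dbar : 'End(Tbar) := linfun dbar_fun.

Definition Ti (i : nat) : {vspace Tbar} :=
  <<[seq ebar L | L <- enum [set L : {set 'I_m} | #|L| == i]]>>%VS.
Definition Tij (i j : nat) : {vspace Tbar} :=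
  <<[seq ebar L | L <- enum [set L : {set 'I_m} | (#|L| == i) && (edeg L == j)]]>>%VS.

Definition Ker_ij (i j : nat) : {vspace Tbar} := (lker dbar :&: Tij i j)%VS.
Definition Im_i1 (i : nat) : {vspace Tbar} := (dbar @: Ti i.+1)%VS.
Definition Im_ij (i j : nat) : {vspace Tbar} := (Im_i1 i :&: Tij i j)%VS.

(* beta_{i,j}(R/I(H)) = dim_K (Ker \bar\partial_i / Im \bar\partial_{i+1})_j *)
Definition betti (i j : nat) : nat := (\dim (Ker_ij i j) - \dim (Im_ij i j))%N.

Definition Bij (i j : nat) : {set {set 'I_m}} :=
  [set L : {set 'I_m} | [&& #|L| == i, edeg L == j,
                          ebar L \in lker dbar & ebar L \notin Im_i1 i]].

Definition hyp1 (i j : nat) : Prop :=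
  forall L : {set 'I_m}, #|L| = i -> edeg L = j ->
  forall k, k \in L -> ~~ (S k \subset \bigcup_(l in L | l != k) S l).

Definition hyp2 (i j : nat) : Prop :=
  forall L : {set 'I_m}, #|L| = i -> edeg L = j ->
  forall p, p \notin L -> S p \subset \bigcup_(l in L) S l ->
  forall k, k \in L -> ~~ (S k \subset \bigcup_(l in p |: L | l != k) S l).

Definition tmax : nat := (\max_(a < m) #|S a|)%N.

End Taylor.

(* Main.v *)
Require Import Defs.
From HB Require Import structures.
From mathcomp Require Import all_boot all_order all_algebra.
From mathcomp Require Import zify ring.
Set Implicit Arguments.
Unset Strict Implicit.
Unset Printing Implicit Defensive.
Import GRing.Theory.
Local Open Scope ring_scope.

Section Aux.
Variables (K : fieldType) (n m : nat) (S : 'I_m -> {set 'I_n}).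

Local Notation Tbar := (Tbar K m).
Local Notation ebar := (@ebar K m).

Lemma ebarE L X : ebar L X = (X == L)%:R.
Proof. by rewrite ffunE. Qed.

Lemma scaleE (a : K) (f : Tbar) X : (a *: f) X = a * f X.
Proof. by rewrite ffunE. Qed.

Lemma Tbar_decomp (f : Tbar) : f = \sum_X f X *: ebar X.
Proof.
apply/ffunP => Y; rewrite sum_ffunE (bigD1 Y) //= big1 => [|X /negPf XY].
  by rewrite scaleE ebarE eqxx mulr1 addr0.
by rewrite scaleE ebarE eq_sym XY mulr0.
Qed.

Lemma span_ebarP (P : {set {set 'I_m}}) (f : Tbar) :
  reflect (forall X, X \notin P -> f X = 0)
          (f \in <<[seq ebar L | L <- enum P]>>%VS).
Proof.
apply: (iffP idP) => [fP X nPX | H].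
  rewrite (coord_span (X:=in_tuple [seq ebar L | L <- enum P]) fP) sum_ffunE big1 // => k _.
  have kP : (k < size (enum P))%N by rewrite -(size_map ebar) ltn_ord.
  rewrite scaleE (nth_map set0) // ebarE.
  have : nth set0 (enum P) k \in enum P by rewrite mem_nth.
  rewrite mem_enum.
  by case: eqP => [<- /=|]; [rewrite (negPf nPX)|rewrite mulr0].
rewrite (Tbar_decomp f) (bigID (mem P)) /=.
rewrite [X in _ + X]big1 ?addr0 => [|X nPX]; last by rewrite H // scale0r.
apply: memv_suml => X PX; apply: memvZ; apply: memv_span.
by apply: map_f; rewrite mem_enum.
Qed.

Lemma dbar_fun_lin : linear (@dbar_fun K n m S).
Proof.
move=> a f g; rewrite /dbar_fun scaler_sumr -big_split /=; apply: eq_bigr => L _.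
by rewrite scalerA -scalerDl !ffunE.
Qed.

Definition dbar_lin : {linear Tbar -> Tbar} :=
  HB.pack (@dbar_fun K n m S) (GRing.isLinear.Build _ _ _ _ _ dbar_fun_lin).

Lemma dbarE f : dbar K S f = \sum_L f L *: dbar_e K S L.
Proof. by rewrite /dbar (lfunE dbar_lin). Qed.

Lemma dbar_ebar L : dbar K S (ebar L) = dbar_e K S L.
Proof.
rewrite dbarE (bigD1 L) //= big1 => [|X /negPf XL]; last by rewrite ebarE XL scale0r.
by rewrite ebarE eqxx scale1r addr0.
Qed.


Definition U (A : {set 'I_m}) := \bigcup_(l in A) S l.

Lemma U_mono (A B : {set 'I_m}) : A \subset B -> U A \subset U B.
Proof.
move=> AB; apply/bigcupsP => l lA; apply: (bigcup_sup l).
exact: (subsetP AB).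
Qed.

Lemma bigcupD1 (L : {set 'I_m}) k :
  \bigcup_(l in L | l != k) S l = U (L :\ k).
Proof. by apply: eq_bigl => l; rewrite !inE andbC. Qed.

Lemma U_D1 (L : {set 'I_m}) k : k \in L -> U L = S k :|: U (L :\ k).
Proof. by move=> kL; rewrite /U (big_setD1 k kL). Qed.

Definition cc (L : {set 'I_m}) k := S k \subset U (L :\ k).

Lemma ccE (L : {set 'I_m}) k : k \in L -> cc L k = (U L \subset U (L :\ k)).
Proof. by move=> kL; rewrite (U_D1 kL) subUset subxx andbT. Qed.

Definition sg (L : {set 'I_m}) k : K := (-1) ^+ pos L k.

Lemma dbar_eE (L : {set 'I_m}) :
  dbar_e K S L = \sum_(k | (k \in L) && cc L k) sg L k *: ebar (L :\ k).
Proof. by apply: eq_bigl => k; rewrite /cc bigcupD1. Qed.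

Definition Pr (L : {set 'I_m}) k k' := [&& k \in L, cc L k, k' \in L :\ k & cc (L :\ k) k'].

Lemma PrE (L : {set 'I_m}) k k' : Pr L k k' =
  [&& k \in L, k' \in L, k' != k & U L \subset U (L :\: [set k; k'])].
Proof.
rewrite /Pr; case kL: (k \in L) => //=; rewrite in_setD1.
case k'L: (k' \in L); rewrite ?andbF ?andFb //= andbT.
case: eqP => [_|k'k]; first by rewrite andbF.
rewrite ccE // ccE; last by rewrite in_setD1 k'L andbT; apply/eqP.
rewrite -setDDl.
apply/andP/idP => [[h1 h2]|h]; first exact: subset_trans h2.
split; first by apply: subset_trans h (U_mono _); apply: subD1set.
apply: subset_trans (U_mono _) h; apply: subD1set.
Qed.

Lemma PrC (L : {set 'I_m}) k k' : Pr L k k' = Pr L k' k.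
Proof.
rewrite !PrE; case: (k \in L); case: (k' \in L) => //=; rewrite eq_sym.
by rewrite [[set k'; k]]setUC.
Qed.


Lemma pos_lt (L : {set 'I_m}) (k k' : 'I_m) : k \in L -> (k < k')%N ->
  pos L k' = (pos (L :\ k) k').+1.
Proof.
move=> kL lt; rewrite /pos (cardsD1 k) inE kL /= ltnW //.
rewrite add1n; congr _.+1; apply: eq_card => l; rewrite !inE; by case: (l == k).
Qed.

Lemma pos_gt (L : {set 'I_m}) (k k' : 'I_m) : (k < k')%N ->
  pos (L :\ k') k = pos L k.
Proof.
move=> lt; rewrite /pos; apply: eq_card => l; rewrite !inE.
case lk: (l <= k)%N; rewrite ?andbF // andbT.
rewrite andbT; case: eqP => [E|] //=.
by move: lk lt; rewrite E => /leq_ltn_trans H /H; rewrite ltnn.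
Qed.

Lemma sg_cancel (L : {set 'I_m}) (k k' : 'I_m) : k \in L -> (k < k')%N ->
  sg L k * sg (L :\ k) k' + sg L k' * sg (L :\ k') k = 0.
Proof.
move=> kL lt; rewrite /sg (pos_lt kL lt) (pos_gt L lt) exprS.
ring.
Qed.


Definition Hf (L : {set 'I_m}) (p : 'I_m * 'I_m) : Tbar :=
  if Pr L p.1 p.2 then (sg L p.1 * sg (L :\ p.1) p.2) *: ebar (L :\ p.1 :\ p.2)
  else 0.

Lemma Hf_diag (L : {set 'I_m}) (p : 'I_m * 'I_m) : p.1 = p.2 -> Hf L p = 0.
Proof. by case: p => a b /= E; rewrite /Hf /Pr /= E !inE eqxx /= !andbF. Qed.

Definition sw (p : 'I_m * 'I_m) := (p.2, p.1).
Lemma swK : involutive sw. Proof. by case. Qed.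

Lemma Hf_pair (L : {set 'I_m}) (p : 'I_m * 'I_m) : (p.1 < p.2)%N -> Hf L p + Hf L (sw p) = 0.
Proof.
case: p => k k' /= lt; rewrite /Hf /= (PrC L k' k).
case P: (Pr L k k'); last by rewrite addr0.
have kL : k \in L by move: P; rewrite /Pr => /andP[].
rewrite !setDDl [[set k'] :|: _]setUC.
by rewrite -scalerDl sg_cancel // scale0r.
Qed.

Lemma dbar2 (L : {set 'I_m}) : dbar K S (dbar_e K S L) = 0.
Proof.
rewrite dbar_eE linear_sum.
transitivity (\sum_k \sum_k' Hf L (k, k')).
  rewrite big_mkcond; apply: eq_bigr => k _.
  have [/andP[kL ckL]|nk] := boolP ((k \in L) && cc L k).
    rewrite linearZ /= dbar_ebar dbar_eE scaler_sumr big_mkcond.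
    apply: eq_bigr => k' _; rewrite /Hf /Pr /= kL ckL /=.
    by case: ifP => _; rewrite ?scalerA ?scaler0.
  rewrite big1 // => k' _; rewrite /Hf /Pr /=.
  by move: nk; case: (k \in L); case: (cc L k).
rewrite pair_bigA /= (bigID (fun p : 'I_m * 'I_m => (p.1 < p.2)%N)) /=.
have -> : \sum_(p : 'I_m * 'I_m | ~~ (p.1 < p.2)%N) Hf L (p.1, p.2) =
          \sum_(p : 'I_m * 'I_m | (p.1 < p.2)%N) Hf L (sw p).
  rewrite (reindex_inj (inv_inj swK)) /=.
  rewrite big_mkcond [RHS]big_mkcond; apply: eq_bigr => [[a b]] _ /=.
  case: ltngtP => // E; rewrite Hf_diag //=.
  by apply: val_inj.
rewrite -big_split big1 //= => [[a b]] /= lt.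
exact: (Hf_pair L (p := (a, b))).
Qed.


Lemma sg2 L k : sg L k * sg L k = 1.
Proof. by rewrite /sg -exprMn mulrNN mulr1 expr1n. Qed.

Lemma key (i j : nat) (v : Tbar) L0 : hyp2 S i j ->
  v \in Im_i1 K S i -> L0 \in Bij K S i j -> v L0 = 0.
Proof.
move=> h2 /memv_imgP[f fT ->] L0B.
have L0B' := L0B; rewrite inE in L0B'.
case/and4P: L0B' => /eqP cL0 /eqP dL0 _ L0nIm.
rewrite dbarE sum_ffunE big1 // => X _; rewrite scaleE.
have [cX|ncX] := eqVneq #|X| i.+1; last first.
  by rewrite (span_ebarP _ _ fT) ?mul0r // inE; apply: ncX.
rewrite dbar_eE sum_ffunE big1 ?mulr0 // => k /andP[kX ckX].
rewrite scaleE ebarE; case: eqP => [E|]; last by rewrite mulr0.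
exfalso; move/negP: L0nIm; apply.
have dX : dbar_e K S X = sg X k *: ebar L0.
  rewrite dbar_eE (bigD1 k) /=; last by rewrite kX ckX.
  rewrite big1 ?addr0 -?E // => k' /andP[/andP[k'X ck'X] k'k].
  exfalso.
  have k'L0 : k' \in L0 by rewrite E !inE k'k.
  have kL0 : k \notin L0 by rewrite E !inE eqxx.
  have SkU : S k \subset \bigcup_(l in L0) S l by rewrite E.
  move: (h2 L0 cL0 dL0 k kL0 SkU k' k'L0); rewrite E setD1K // bigcupD1.
  by rewrite -/(cc X k') ck'X.
have -> : ebar L0 = dbar K S (sg X k *: ebar X).
  by rewrite linearZ /= dbar_ebar dX scalerA sg2 scale1r.
apply: memv_img; apply: memvZ; apply: memv_span; apply: map_f.
by rewrite mem_enum inE cX.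
Qed.


Lemma dbar_dbar f : dbar K S (dbar K S f) = 0.
Proof.
rewrite [dbar K S f]dbarE linear_sum big1 // => L _.
by rewrite linearZ /= dbar2 scaler0.
Qed.

Lemma dim_span_ebar (A : {set {set 'I_m}}) :
  \dim <<[seq ebar L | L <- enum A]>> = #|A|.
Proof.
suff /eqP -> : free [seq ebar L | L <- enum A] by rewrite size_map cardE.
rewrite -[[seq _ | _ <- _]]in_tupleE; apply/freeP => k Hk i.
have iA : (i < size (enum A))%N by rewrite -(size_map ebar) ltn_ord.
have := congr1 (fun f : Tbar => f (nth set0 (enum A) i)) Hk.
rewrite /= sum_ffunE ffunE (bigD1 i) //= big1 => [|i' i'i].
  by rewrite scaleE (nth_map set0) // ebarE eqxx mulr1 addr0.
have i'A : (i' < size (enum A))%N by rewrite -(size_map ebar) ltn_ord.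
rewrite scaleE (nth_map set0) // ebarE nth_uniq ?enum_uniq //.
by rewrite (inj_eq val_inj) eq_sym (negPf i'i) mulr0.
Qed.

Lemma card_bigcup_le (A : {set 'I_m}) :
  (#|\bigcup_(l in A) S l| <= \sum_(l in A) #|S l|)%N.
Proof.
elim/big_rec2: _ => [|l x y _ le]; first by rewrite cards0.
by apply: leq_trans (leq_card_setU _ _).1 _; rewrite leq_add2l.
Qed.

Lemma disj_tmax (i : nat) (L : {set 'I_m}) k :
  #|L| = i -> edeg S L = (tmax S * i)%N -> k \in L ->
  S k :&: U (L :\ k) = set0.
Proof.
move=> cL dL kL; apply/eqP; rewrite -cards_eq0.
have tk : (#|S k| <= tmax S)%N by rewrite /tmax; apply: (@leq_bigmax _ (fun a => #|S a|)).
have hu : (#|U (L :\ k)| <= #|L :\ k| * tmax S)%N.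
  apply: leq_trans (card_bigcup_le _) _; rewrite -sum_nat_const.
  by apply: leq_sum => l _; rewrite /tmax; apply: (@leq_bigmax _ (fun a => #|S a|)).
have cD := cardsD1 k L; rewrite kL cL in cD.
have := cardsUI (S k) (U (L :\ k)); rewrite -U_D1 //.
rewrite /edeg in dL; rewrite /U in dL *; rewrite dL.
move: hu tk; rewrite /U; rewrite cD; nia.
Qed.


Lemma hyp1_tmax i : simple_hypergraph S -> hyp1 S i (tmax S * i).
Proof.
move=> [HS1 _] L cL dL k kL; rewrite bigcupD1; apply/negP => sub.
have := disj_tmax cL dL kL; move/setIidPl: sub => ->.
move=> E; have := HS1 k; rewrite E cards0.
by [].
Qed.

Lemma hyp2_tmax i : simple_hypergraph S -> hyp2 S i (tmax S * i).
Proof.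
move=> [_ HS2] L cL dL p pL Sp k kL; apply/negP => sub.
have D := disj_tmax cL dL kL.
have pk : k != p by apply: contraNneq pL => <-.
move/negP: (HS2 k p pk); apply; apply/subsetP => x xk.
have := subsetP sub x xk; rewrite bigcupD1 => /bigcupP[l].
rewrite !inE => /andP[lk /orP[/eqP -> //|lL]] xl.
have : x \in S k :&: U (L :\ k).
  by rewrite inE xk; apply/bigcupP; exists l; rewrite // !inE lk.
by rewrite D inE.
Qed.

Lemma ebar_ker1 i j (L : {set 'I_m}) : hyp1 S i j -> #|L| = i -> edeg S L = j ->
  ebar L \in lker (dbar K S).
Proof.
move=> h1 cL dL; rewrite memv_ker dbar_ebar dbar_eE big1 // => k /andP[kL ck].
by move: (h1 L cL dL k kL); rewrite bigcupD1 -/(cc L k) ck.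
Qed.

End Aux.

Theorem lemma2p2 (K : fieldType) (n m : nat) (S : 'I_m -> {set 'I_n})
  (HS : simple_hypergraph S) (i j : nat) :
  let B := Bij K S i j in
  let e := @ebar K m in
  let span_B := <<[seq e L | L <- enum B]>>%VS in
  (* (1) *)
  (hyp1 S i j ->
     (Ker_ij K S i j <= span_B + Im_ij K S i j)%VS /\
     (betti K S i j <= #|B|)%N) /\
  (* (2) *)
  (hyp2 S i j ->
     (forall c : {set 'I_m} -> K,
        (\sum_(L in B) c L *: e L) \in Im_ij K S i j ->
        forall L, L \in B -> c L = 0) /\
     (#|B| <= betti K S i j)%N) /\
  (* (3) *)
  (hyp1 S i j -> hyp2 S i j -> betti K S i j = #|B|) /\
  (j = (tmax S * i)%N -> betti K S i j = #|B|).
Proof.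
move=> B e span_B.
have dimB : \dim span_B = #|B| by apply: (dim_span_ebar K).
have ImKer : (Im_ij K S i j <= Ker_ij K S i j)%VS.
  apply/subvP => v /memv_capP[/memv_imgP[f _ ->] vT].
  by apply/memv_capP; split => //; rewrite memv_ker dbar_dbar.
have BKer : (span_B <= Ker_ij K S i j)%VS.
  apply/span_subvP => _ /mapP[L LB ->]; rewrite mem_enum in LB.
  have LB' := LB; rewrite inE in LB'; case/and4P: LB' => /eqP cL /eqP dL kerL _.
  apply/memv_capP; split => //; apply: memv_span; apply: map_f.
  by rewrite mem_enum inE cL dL !eqxx.
have P1 : hyp1 S i j ->
     (Ker_ij K S i j <= span_B + Im_ij K S i j)%VS /\
     (betti K S i j <= #|B|)%N.
  move=> h1.
  have sub : (Ker_ij K S i j <= span_B + Im_ij K S i j)%VS.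
    apply/subvP => v /memv_capP[_ vT].
    rewrite (Tbar_decomp v); apply: memv_suml => X _.
    have [XT|nXT] := boolP (X \in [set L : {set 'I_m} | (#|L| == i) && (edeg S L == j)]); last first.
      by rewrite (span_ebarP _ _ vT) // scale0r mem0v.
    apply: memvZ; have XT' := XT; rewrite inE in XT'; case/andP: XT' => /eqP cX /eqP dX.
    have [XIm|XnIm] := boolP (ebar K X \in Im_i1 K S i).
      apply: (subvP (addvSr _ _)); apply/memv_capP; split => //.
      by apply: memv_span; apply: map_f; rewrite mem_enum.
    apply: (subvP (addvSl _ _)); apply: memv_span; apply: map_f.
    by rewrite mem_enum inE cX dX !eqxx (ebar_ker1 K h1 cX dX).
  split => //; rewrite /betti.
  have := dimvS sub; have := dimv_sum_cap span_B (Im_ij K S i j).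
  rewrite dimB => E le; rewrite leq_subLR addnC -E; exact: (leq_trans le (leq_addr _ _)).
have P2 : hyp2 S i j ->
     (forall c : {set 'I_m} -> K,
        (\sum_(L in B) c L *: e L) \in Im_ij K S i j ->
        forall L, L \in B -> c L = 0) /\
     (#|B| <= betti K S i j)%N.
  move=> h2; split.
    move=> c /memv_capP[cIm _] L LB.
    have := key h2 cIm LB; rewrite sum_ffunE (bigD1 L) //= big1 => [|X /andP[_ XL]].
      by rewrite scaleE (ebarE K) eqxx mulr1 addr0.
    by rewrite scaleE (ebarE K) eq_sym (negPf XL) mulr0.
  have cap0 : (span_B :&: Im_ij K S i j = 0)%VS.
    apply/eqP; rewrite -subv0; apply/subvP => v /memv_capP[vB /memv_capP[vIm _]].
    rewrite memv0; apply/eqP/ffunP => X; rewrite ffunE.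
    have [XB|XnB] := boolP (X \in B); first exact: key h2 vIm XB.
    exact: (span_ebarP _ _ vB).
  have sK : (span_B + Im_ij K S i j <= Ker_ij K S i j)%VS by rewrite subv_add BKer ImKer.
  have := dimvS sK; rewrite dimv_disjoint_sum // dimB /betti => le.
  by apply: leq_trans (leq_sub2r _ le); rewrite addnK.
have P3 : hyp1 S i j -> hyp2 S i j -> betti K S i j = #|B|.
  move=> h1 h2; apply/eqP; rewrite eqn_leq (P1 h1).2 (P2 h2).2 //.
split => //; split => //; split => // Ej.
by apply: P3; rewrite Ej; [apply: hyp1_tmax | apply: hyp2_tmax].
Qed.
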